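(* Let $\alpha,\beta,\gamma\in\mathbb{Z}[i]$ satisfy $\alpha^2+i\beta^2+(1+i)\gamma^2=0$, $\alpha\beta\gamma\neq0$, $\gcd(\alpha,\beta)\in U$. Then there are units $\varepsilon_1,\varepsilon_2,\varepsilon_3\in U$ such that $(X,Y,Z)=(\varepsilon_1\alpha,\varepsilon_2\beta,\varepsilon_3\gamma)$ satisfies $X^2+iY^2=(1+i)Z^2$ with $X,Y,Z\in O^I$, $\gcd(X,Y)\in U$, $XYZ\neq0$. Conversely, if $(X,Y,Z)$ satisfies $X^2+iY^2=(1+i)Z^2$, $\gcd(X,Y)\in U$, $XYZ\ne0$, then $(X,Y,iZ)$ is a solution of $X^2+iY^2+(1+i)Z^2=0$ with the same conditions.
   Context: $\mathbb{Z}[i]$ is the ring of Gaussian integers, $U=\{1,-1,i,-i\}$ its unit group; $R(\alpha),I(\alpha)$ are real and imaginary parts. $\gcd(x,y)\in U$ means no common non-unit divisor. $O=\{\alpha: R(\alpha)+I(\alpha)\equiv1\pmod 2\}$, $O^I=\{\alpha\in O: R(\alpha)\equiv 1\pmod 4\}$. *)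

(* Defs.v *)
(* Gaussian integers Z[i] modelled as pairs (real part, imaginary part) of integers. *)
From Stdlib Require Import ZArith.
Open Scope Z_scope.

Record gint := GI { R : Z; I : Z }.

Definition gadd (x y : gint) : gint := GI (R x + R y) (I x + I y).
Definition gmul (x y : gint) : gint :=
  GI (R x * R y - I x * I y) (R x * I y + I x * R y).
Definition g0 : gint := GI 0 0.
Definition g1 : gint := GI 1 0.
Definition gi : gint := GI 0 1.
Definition g1pi : gint := GI 1 1.
Definition gsq (x : gint) : gint := gmul x x.

Definition inU (u : gint) : Prop :=
  u = GI 1 0 \/ u = GI (-1) 0 \/ u = GI 0 1 \/ u = GI 0 (-1).

Definition gdvd (d x : gint) : Prop := exists q : gint, x = gmul d q.

Definition gcd_in_U (x y : gint) : Prop :=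
  forall d : gint, gdvd d x -> gdvd d y -> inU d.

Definition inO (a : gint) : Prop := (R a + I a) mod 2 = 1.
Definition inOI (a : gint) : Prop := inO a /\ R a mod 4 = 1.

(* Main.v *)
Require Import Defs.
From Stdlib Require Import ZArith Lia List Setoid Morphisms.
Open Scope Z_scope. Open Scope bool_scope.

Definition Pre a b c d e f := a*a - b*b - 2*c*d + e*e - f*f - 2*e*f.
Definition Pim a b c d e f := 2*a*b + (c*c - d*d) + (e*e - f*f) + 2*e*f.

#[local] Existing Instances eqm_setoid Zplus_eqm Zminus_eqm Zmult_eqm.
Lemma eqm_P a b c d e f a' b' c' d' e' f' :
  eqm 4 a a' -> eqm 4 b b' -> eqm 4 c c' -> eqm 4 d d' -> eqm 4 e e' -> eqm 4 f f' ->
  eqm 4 (Pre a b c d e f) (Pre a' b' c' d' e' f') /\ eqm 4 (Pim a b c d e f) (Pim a' b' c' d' e' f').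
Proof. intros Ha Hb Hc Hd He Hf. unfold Pre, Pim. split; rewrite Ha, Hb, Hc, Hd, He, Hf; reflexivity. Qed.

Definition chk a b c d e f : bool :=
  implb ((Pre a b c d e f mod 4 =? 0) && (Pim a b c d e f mod 4 =? 0)
         && negb (((a+b) mod 2 =? 0) && ((c+d) mod 2 =? 0)))
   (((a+b) mod 2 =? 1) && ((c+d) mod 2 =? 1) && ((e+f) mod 2 =? 1)
    && (a mod 2 =? c mod 2) && negb (a mod 2 =? e mod 2)).

Definition rs := 0 :: 1 :: 2 :: 3 :: nil.

Lemma chk_all : forallb (fun a => forallb (fun b => forallb (fun c => forallb (fun d =>
  forallb (fun e => forallb (fun f => chk a b c d e f) rs) rs) rs) rs) rs) rs = true.
Proof. vm_compute. reflexivity. Qed.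

Lemma in_rs x : 0 <= x < 4 -> In x rs.
Proof. intros. assert (x = 0 \/ x = 1 \/ x = 2 \/ x = 3) by lia. destruct H0 as [ -> | [ -> | [ -> | -> ] ] ]; simpl; auto. Qed.

Lemma h a b : (a mod 4 + b mod 4) mod 2 = (a+b) mod 2.
Proof. pose proof (Z.div_mod a 4 ltac:(lia)). pose proof (Z.div_mod b 4 ltac:(lia)).
 pose proof (Z.mod_pos_bound a 4 ltac:(lia)). pose proof (Z.mod_pos_bound b 4 ltac:(lia)).
 set (x := a mod 4) in *. set (y := b mod 4) in *. set (p:= a/4) in *. set (q := b/4) in *.
 clearbody x y p q. subst a b.
 pose proof (Z.div_mod (x+y) 2 ltac:(lia)). pose proof (Z.mod_pos_bound (x+y) 2 ltac:(lia)).
 pose proof (Z.div_mod (4*p+x+(4*q+y)) 2 ltac:(lia)). pose proof (Z.mod_pos_bound (4*p+x+(4*q+y)) 2 ltac:(lia)).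
 lia. Qed.
Lemma h2 a : (a mod 4) mod 2 = a mod 2.
Proof. pose proof (Z.div_mod a 4 ltac:(lia)). pose proof (Z.mod_pos_bound a 4 ltac:(lia)).
 set (x := a mod 4) in *. set (p:= a/4) in *. clearbody x p. subst a.
 pose proof (Z.div_mod x 2 ltac:(lia)). pose proof (Z.mod_pos_bound x 2 ltac:(lia)).
 pose proof (Z.div_mod (4*p+x) 2 ltac:(lia)). pose proof (Z.mod_pos_bound (4*p+x) 2 ltac:(lia)).
 lia. Qed.

Lemma mod4 a b c d e f :
  Pre a b c d e f = 0 -> Pim a b c d e f = 0 ->
  ~ ((a+b) mod 2 = 0 /\ (c+d) mod 2 = 0) ->
  (a+b) mod 2 = 1 /\ (c+d) mod 2 = 1 /\ (e+f) mod 2 = 1 /\ a mod 2 = c mod 2 /\ a mod 2 <> e mod 2.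
Proof.
  intros H1 H2 H3.
  destruct (eqm_P a b c d e f (a mod 4) (b mod 4) (c mod 4) (d mod 4) (e mod 4) (f mod 4))
    as [E1 E2]; try (unfold eqm; rewrite Zmod_mod; reflexivity).
  unfold eqm in E1, E2. rewrite H1 in E1. rewrite H2 in E2.
  pose proof chk_all as C.
  assert (B : forall x, In (x mod 4) rs) by (intro x; apply in_rs, Z.mod_pos_bound; lia).
  rewrite forallb_forall in C; specialize (C _ (B a)).
  rewrite forallb_forall in C; specialize (C _ (B b)).
  rewrite forallb_forall in C; specialize (C _ (B c)).
  rewrite forallb_forall in C; specialize (C _ (B d)).
  rewrite forallb_forall in C; specialize (C _ (B e)).
  rewrite forallb_forall in C; specialize (C _ (B f)).
  unfold chk in C. rewrite <- E1, <- E2 in C. rewrite !h, !h2 in C. simpl in C.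
  assert (((a + b) mod 2 =? 0) && ((c + d) mod 2 =? 0) = false) as G.
  { destruct ((a + b) mod 2 =? 0) eqn:X1; destruct ((c + d) mod 2 =? 0) eqn:X2; try reflexivity.
    exfalso; apply H3; apply Z.eqb_eq in X1, X2. clear -X1 X2; split; lia. }
  rewrite G in C. simpl in C.
  repeat rewrite Bool.andb_true_iff in C. rewrite Bool.negb_true_iff in C.
  destruct C as [[[[C1 C2] C3] C4] C5]. rewrite Z.eqb_eq in C1, C2, C3, C4. rewrite Z.eqb_neq in C5.
  clear -C1 C2 C3 C4 C5. repeat split; lia.
Qed.

Lemma normA a b : a mod 2 = 1 -> (a+b) mod 2 = 1 ->
  exists u, (u = GI 1 0 \/ u = GI (-1) 0) /\ inOI (gmul u (GI a b)).
Proof. intros. destruct (Z.eq_dec (a mod 4) 1).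
- exists (GI 1 0). split; [left; reflexivity|]. unfold inOI, inO, gmul; cbn [Defs.R Defs.I]. split; Z.to_euclidean_division_equations; lia.
- exists (GI (-1) 0). split; [right; reflexivity|]. unfold inOI, inO, gmul; cbn [Defs.R Defs.I]. split; Z.to_euclidean_division_equations; lia.
Qed.

Lemma normB a b : a mod 2 = 0 -> (a+b) mod 2 = 1 ->
  exists u, (u = GI 0 1 \/ u = GI 0 (-1)) /\ inOI (gmul u (GI a b)).
Proof. intros. destruct (Z.eq_dec ((-b) mod 4) 1).
- exists (GI 0 1). split; [left; reflexivity|]. unfold inOI, inO, gmul; cbn [Defs.R Defs.I]. split; Z.to_euclidean_division_equations; lia.
- exists (GI 0 (-1)). split; [right; reflexivity|]. unfold inOI, inO, gmul; cbn [Defs.R Defs.I]. split; Z.to_euclidean_division_equations; lia.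
Qed.

Lemma gmul_comm x y : gmul x y = gmul y x.
Proof. destruct x, y; unfold gmul; cbn [Defs.R Defs.I]; f_equal; ring. Qed.
Lemma gmul_assoc x y z : gmul x (gmul y z) = gmul (gmul x y) z.
Proof. destruct x, y, z; unfold gmul; cbn [Defs.R Defs.I]; f_equal; ring. Qed.

Lemma unit_inv u : inU u -> exists u', forall x, gmul u' (gmul u x) = x.
Proof. intros [->|[->|[->| ->]]].
- exists (GI 1 0); intros [x y]; unfold gmul; cbn [Defs.R Defs.I]; f_equal; ring.
- exists (GI (-1) 0); intros [x y]; unfold gmul; cbn [Defs.R Defs.I]; f_equal; ring.
- exists (GI 0 (-1)); intros [x y]; unfold gmul; cbn [Defs.R Defs.I]; f_equal; ring.
- exists (GI 0 1); intros [x y]; unfold gmul; cbn [Defs.R Defs.I]; f_equal; ring.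
Qed.

Lemma dvd_mul d v y : gdvd d y -> gdvd d (gmul v y).
Proof. intros [q ->]. exists (gmul v q). rewrite !gmul_assoc, (gmul_comm v d). reflexivity. Qed.

Lemma gcd_unit u1 u2 a b : inU u1 -> inU u2 -> gcd_in_U a b -> gcd_in_U (gmul u1 a) (gmul u2 b).
Proof. intros U1 U2 G d D1 D2. destruct (unit_inv _ U1) as [v1 V1]. destruct (unit_inv _ U2) as [v2 V2].
  apply G. - rewrite <- (V1 a). apply dvd_mul; auto. - rewrite <- (V2 b). apply dvd_mul; auto. Qed.

Lemma unit_nz u z : inU u -> z <> g0 -> gmul u z <> g0.
Proof. intros U Z E. destruct (unit_inv _ U) as [v V]. apply Z. rewrite <- (V z), E.
  unfold gmul, g0; cbn [Defs.R Defs.I]; f_equal; ring. Qed.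

Lemma prod_units u1 u2 u3 a b c :
  gmul (gmul (gmul u1 a) (gmul u2 b)) (gmul u3 c) = gmul (gmul (gmul u1 u2) u3) (gmul (gmul a b) c).
Proof. destruct u1, u2, u3, a, b, c; unfold gmul; cbn [Defs.R Defs.I]; f_equal; ring. Qed.

Lemma inU_mul u v : inU u -> inU v -> inU (gmul u v).
Proof. intros [->|[->|[->| ->]]] [->|[->|[->| ->]]]; unfold inU, gmul; cbn [Defs.R Defs.I]; auto 6. Qed.

Lemma not_both a b c d : gcd_in_U (GI a b) (GI c d) -> ~ ((a+b) mod 2 = 0 /\ (c+d) mod 2 = 0).
Proof. intros G [E1 E2].
  assert (D : forall x y, (x+y) mod 2 = 0 -> gdvd (GI 1 1) (GI x y)).
  { intros x y E. exists (GI ((x+y)/2) ((y-x)/2)).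
    pose proof (Z.div_mod (x+y) 2 ltac:(lia)). pose proof (Z.div_mod (y-x) 2 ltac:(lia)).
    assert ((y-x) mod 2 = 0) by (Z.to_euclidean_division_equations; lia).
    unfold gmul; cbn [Defs.R Defs.I]; f_equal; lia. }
  specialize (G _ (D _ _ E1) (D _ _ E2)).
  unfold inU in G. destruct G as [G|[G|[G|G]]]; discriminate G.
Qed.

Theorem theorem4p18 :
  (forall alpha beta gamma : gint,
      gadd (gadd (gsq alpha) (gmul gi (gsq beta))) (gmul g1pi (gsq gamma)) = g0 ->
      gmul (gmul alpha beta) gamma <> g0 ->
      gcd_in_U alpha beta ->
      exists e1 e2 e3 : gint,
        inU e1 /\ inU e2 /\ inU e3 /\
        let X := gmul e1 alpha in
        let Y := gmul e2 beta in
        let Z := gmul e3 gamma in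
        gadd (gsq X) (gmul gi (gsq Y)) = gmul g1pi (gsq Z) /\
        inOI X /\ inOI Y /\ inOI Z /\
        gcd_in_U X Y /\
        gmul (gmul X Y) Z <> g0)
  /\
  (forall X Y Z : gint,
      gadd (gsq X) (gmul gi (gsq Y)) = gmul g1pi (gsq Z) ->
      gcd_in_U X Y ->
      gmul (gmul X Y) Z <> g0 ->
      gadd (gadd (gsq X) (gmul gi (gsq Y))) (gmul g1pi (gsq (gmul gi Z))) = g0 /\
      gcd_in_U X Y /\
      gmul (gmul X Y) (gmul gi Z) <> g0).
Proof.
  split.
  - intros [a b] [c d] [e f] H Hnz Hg.
    pose proof (not_both _ _ _ _ Hg) as NB.
    unfold gadd, gsq, gmul, gi, g1pi, g0 in H.
    pose proof (f_equal Defs.R H) as H1; pose proof (f_equal Defs.I H) as H2.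
    cbn [Defs.R Defs.I] in H1, H2.
    assert (P1 : Pre a b c d e f = 0) by (unfold Pre; rewrite <- H1; ring).
    assert (P2 : Pim a b c d e f = 0) by (unfold Pim; rewrite <- H2; ring).
    destruct (mod4 _ _ _ _ _ _ P1 P2 NB) as (Q1 & Q2 & Q3 & Q4 & Q5).
    assert (Hu : forall u1 u2 u3, inU u1 -> inU u2 -> inU u3 ->
       gcd_in_U (gmul u1 (GI a b)) (gmul u2 (GI c d)) /\
       gmul (gmul (gmul u1 (GI a b)) (gmul u2 (GI c d))) (gmul u3 (GI e f)) <> g0).
    { intros u1 u2 u3 U1 U2 U3. split. apply gcd_unit; auto.
      rewrite prod_units. apply unit_nz; auto. apply inU_mul; auto. apply inU_mul; auto. }
    destruct (Z.eq_dec (a mod 2) 1) as [Ha|Ha].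
    + destruct (normA a b Ha Q1) as [u1 [U1 O1]].
      destruct (normA c d ltac:(lia) Q2) as [u2 [U2 O2]].
      destruct (normB e f ltac:(pose proof (Z.mod_pos_bound e 2); lia) Q3) as [u3 [U3 O3]].
      assert (I1 : inU u1) by (unfold inU; tauto).
      assert (I2 : inU u2) by (unfold inU; tauto).
      assert (I3 : inU u3) by (unfold inU; tauto).
      destruct (Hu _ _ _ I1 I2 I3) as [G N].
      exists u1, u2, u3. do 3 (split; [assumption|]). cbv zeta.
      split; [|tauto].
      destruct U1 as [->| ->]; destruct U2 as [->| ->]; destruct U3 as [->| ->];
        unfold gadd, gsq, gmul, gi, g1pi; cbn [Defs.R Defs.I]; f_equal; nia.
    + destruct (normB a b ltac:(pose proof (Z.mod_pos_bound a 2); lia) Q1) as [u1 [U1 O1]].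
      destruct (normB c d ltac:(pose proof (Z.mod_pos_bound a 2); lia) Q2) as [u2 [U2 O2]].
      destruct (normA e f ltac:(pose proof (Z.mod_pos_bound a 2); pose proof (Z.mod_pos_bound e 2); lia) Q3) as [u3 [U3 O3]].
      assert (I1 : inU u1) by (unfold inU; tauto).
      assert (I2 : inU u2) by (unfold inU; tauto).
      assert (I3 : inU u3) by (unfold inU; tauto).
      destruct (Hu _ _ _ I1 I2 I3) as [G N].
      exists u1, u2, u3. do 3 (split; [assumption|]). cbv zeta.
      split; [|tauto].
      destruct U1 as [->| ->]; destruct U2 as [->| ->]; destruct U3 as [->| ->];
        unfold gadd, gsq, gmul, gi, g1pi; cbn [Defs.R Defs.I]; f_equal; nia.
  - intros X Y Z H G N. split; [|split; [exact G|]].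
    + destruct X as [a b], Y as [c d], Z as [e f].
      unfold gadd, gsq, gmul, gi, g1pi, g0 in H |- *.
      pose proof (f_equal Defs.R H) as H1; pose proof (f_equal Defs.I H) as H2.
      cbn [Defs.R Defs.I] in H1, H2 |- *. f_equal; nia.
    + replace (gmul (gmul X Y) (gmul gi Z)) with (gmul gi (gmul (gmul X Y) Z)).
      * apply unit_nz; auto. unfold inU, gi; tauto.
      * destruct X, Y, Z; unfold gmul, gi; cbn [Defs.R Defs.I]; f_equal; ring.
Qed.
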